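(* Let $H$ be the disjoint union (with no edges between them) of cliques $KH_1,KH_2,\ldots,KH_s$ of sizes $y_1\ge y_2\ge\cdots\ge y_s\ge 1$. Then $$\rho(H)=\sum_{i=1}^s i\,y_i.$$
   Context: All graphs are finite and simple. A coloring means a proper vertex coloring; an induced subgraph is rainbow if all its vertices have pairwise different colors. For a graph $H$, $\rho(H)$ is the least number $m$ such that there exists a graph $G$ on $m$ vertices such that every proper vertex coloring of $G$ contains a rainbow induced subgraph isomorphic to $H$. *)

(* Defs.v *)
From mathcomp Require Import all_boot all_order.
Set Implicit Arguments. Unset Strict Implicit. Unset Printing Implicit Defensive.

Definition simple_graph (V : finType) (e : rel V) : Prop :=
  symmetric e /\ irreflexive e.

(* A proper vertex coloring (colors taken in nat; for a finite graph this
   loses no generality). *)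
Definition proper_coloring (V : finType) (e : rel V) (c : V -> nat) : Prop :=
  forall x y, e x y -> c x <> c y.

Definition induced_embedding (W V : finType) (eH : rel W) (eG : rel V)
  (f : W -> V) : Prop :=
  injective f /\ forall u v, eG (f u) (f v) = eH u v.

Definition rainbow_forcing (W V : finType) (eH : rel W) (eG : rel V) : Prop :=
  forall c : V -> nat, proper_coloring eG c ->
    exists f : W -> V, induced_embedding eH eG f /\ injective (fun w => c (f w)).

Definition rho_admissible (W : finType) (eH : rel W) (m : nat) : Prop :=
  exists eG : rel 'I_m, simple_graph eG /\ rainbow_forcing eH eG.

Definition is_rho (W : finType) (eH : rel W) (m : nat) : Prop :=
  rho_admissible eH m /\ forall k, rho_admissible eH k -> m <= k.

(* Disjoint union of cliques of sizes y 0, ..., y (s-1):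
   vertex (i, j) with j < y i; two vertices adjacent iff distinct and in
   the same clique. *)
Definition cliques_vertex (s : nat) (y : 'I_s -> nat) : finType :=
  {i : 'I_s & 'I_(y i)}.

Definition cliques_rel (s : nat) (y : 'I_s -> nat) : rel (cliques_vertex y) :=
  fun u v => (tag u == tag v) && (u != v).
Arguments cliques_vertex : clear implicits.
Arguments cliques_rel : clear implicits.

(* Main.v *)
Require Import Defs.
From mathcomp Require Import all_boot all_order.
From mathcomp Require Import zify.
Set Implicit Arguments. Unset Strict Implicit. Unset Printing Implicit Defensive.

Lemma count_le (s : nat) (i : 'I_s) : \sum_(j < s) (j <= i) = i.+1.
Proof.
rewrite -(big_mkord xpredT (fun j => (j <= i : nat))).
rewrite (big_cat_nat _ (n := i.+1)) //=.
rewrite big_nat_cond (eq_bigr (fun _ => 1)); last first.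
  by move=> j /andP[/andP[_ h] _]; rewrite ltnS in h; rewrite h.
rewrite -big_nat_cond sum_nat_const_nat subn0 muln1.
rewrite big_nat_cond big1 ?addn0 // => j /andP[/andP[h _] _].
by rewrite leqNgt h.
Qed.

Lemma my_card_sum (T : finType) (P : pred T) : #|[set x | P x]| = \sum_x P x.
Proof.
by rewrite -sum1_card big_mkcond /=; apply: eq_bigr => x _; rewrite inE; case: (P x).
Qed.

Lemma sum_tag (s : nat) (y : 'I_s -> nat) (F : 'I_s -> nat) :
  \sum_(w : cliques_vertex s y) F (tag w) = \sum_(i < s) y i * F i.
Proof.
have := @sig_big_dep nat 0 addn 'I_s (fun i => 'I_(y i)) xpredT (fun i => xpredT) (fun i _ => F i).
move=> /= <-; apply: eq_bigr => i _.
by rewrite sum_nat_const card_ord.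
Qed.

Lemma card_cv (s : nat) (y : 'I_s -> nat) : #|cliques_vertex s y| = \sum_(i < s) y i.
Proof.
rewrite card_tagged sumnE big_map big_enum /=.
by apply: eq_bigr => i _; rewrite card_ord.
Qed.
Definition indep (V : finType) (e : rel V) (I : {set V}) :=
  [forall x in I, forall y in I, ~~ e x y].

Lemma greedy_col (V : finType) (e : rel V) : irreflexive e -> forall n (A : {set V}),
  #|A| <= n ->
  exists c : V -> nat, (forall x y, x \in A -> y \in A -> e x y -> c x <> c y) /\
   forall t (I : {set V}), I \subset A -> indep e I -> (forall v, v \in I -> t <= c v) ->
     #|I| <= #|[set v in A | c v == t]|.
Proof.
move=> irr; elim=> [|n IH] A hA.
  have A0 : A = set0 by apply/eqP; rewrite -cards_eq0; lia.
  subst A; exists (fun _ => 0); split; first by move=> x y; rewrite inE.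
  by move=> t I IA _ _; move: (subset_leq_card IA); rewrite cards0 leqn0 => /eqP ->.
have i0 : (set0 \subset A) && indep e set0.
  by rewrite sub0set; apply/forallP => x; rewrite inE.
case: (@arg_maxnP _ set0 (fun I : {set V} => (I \subset A) && indep e I) (fun I : {set V} => #|I|) i0) => C /andP[CA indC] Cmax.
case: (set_0Vmem A) => [A0|[a aA]].
  subst A; exists (fun _ => 0); split; first by move=> x y; rewrite inE.
  by move=> t I IA _ _; move: (subset_leq_card IA); rewrite cards0 leqn0 => /eqP ->.
have C1 : 0 < #|C|.
  have : #|[set a]| <= #|C|.
    apply: Cmax; rewrite sub1set aA /=.
    by apply/forallP => x; apply/implyP => /set1P ->; apply/forallP => z;
      apply/implyP => /set1P ->; rewrite irr.
  by rewrite cards1.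
have hAC : #|A :\: C| <= n.
  rewrite cardsDS //; lia.
case: (IH _ hAC) => c' [c'p c'm].
exists (fun v => if v \in C then 0 else (c' v).+1); split.
  move=> x y xA yA exy.
  case xC: (x \in C); case yC: (y \in C) => //.
  - by move: indC => /forallP/(_ x)/implyP/(_ xC)/forallP/(_ y)/implyP/(_ yC); rewrite exy.
  - move=> [] /c'p; apply => //; rewrite inE ?xC ?yC //.
case=> [|t] I IA indI It.
  apply: leq_trans (Cmax I _) _; first by rewrite IA indI.
  apply: subset_leq_card; apply/subsetP => v vC.
  by rewrite inE vC (subsetP CA) .
have IAC : I \subset A :\: C.
  apply/subsetP => v vI; rewrite inE (subsetP IA) // andbT.
  by apply/negP => vC; have := It v vI; rewrite vC.
apply: leq_trans (c'm t I IAC indI _) _.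
  by move=> v vI; have := It v vI; rewrite (negbTE (setDP (subsetP IAC v vI)).2).
apply: subset_leq_card; apply/subsetP => v; rewrite !inE.
by case/andP => /andP[vC vA] /eqP <-; rewrite (negbTE vC) vA eqxx.
Qed.

Lemma pair_ineq (s : nat) (y : 'I_s -> nat) (m : 'I_s -> nat) :
  (forall i j : 'I_s, i <= j -> y j <= y i) ->
  \sum_(i < s) i.+1 * y i <= \sum_(j < s) \sum_(i < s) y i * (m i <= m j).
Proof.
move=> ydec.
have sym : forall F : 'I_s -> 'I_s -> nat,
    \sum_(j < s) \sum_(i < s) (F i j + F j i) = 2 * \sum_(j < s) \sum_(i < s) F i j.
  move=> F; rewrite mul2n -addnn.
  rewrite (eq_bigr (fun j => \sum_(i < s) F i j + \sum_(i < s) F j i)); last first.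
    by move=> j _; rewrite big_split.
  by rewrite big_split /= [X in _ + X = _]exchange_big.
have -> : \sum_(i < s) i.+1 * y i = \sum_(j < s) \sum_(i < s) y j * (i <= j).
  apply: eq_bigr => j _; rewrite -big_distrr /= count_le mulnC //.
rewrite -(leq_pmul2l (isT : 0 < 2)) -!sym.
apply: leq_sum => j _; apply: leq_sum => i _.
case: (ltngtP i j) => hij.
- rewrite muln1 muln0 addn0; case: (leqP (m i) (m j)) => hm.
    by rewrite muln1; apply: leq_trans (ydec _ _ (ltnW hij)) (leq_addr _ _).
  by rewrite (ltnW hm) muln1 muln0 add0n.
- rewrite muln0 add0n muln1; case: (leqP (m i) (m j)) => hm.
    by rewrite muln1 leq_addr.
  by rewrite (ltnW hm) muln1 muln0 add0n; apply: ydec; apply: ltnW.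
- have e : i = j by apply: val_inj.
  by subst i; rewrite !leqnn.
Qed.

Lemma LB (V : finType) (e : rel V) (s : nat) (y : 'I_s -> nat) :
  simple_graph e ->
  (forall i j : 'I_s, i <= j -> y j <= y i) ->
  (forall i : 'I_s, 0 < y i) ->
  rainbow_forcing (cliques_rel s y) e ->
  \sum_(i < s) i.+1 * y i <= #|V|.
Proof.
move=> [esym irr] ydec ypos forc.
have [c [cp cm]] := greedy_col irr (leqnn #|[set: V]|).
have cpr : proper_coloring e c by move=> x y0 /cp; apply; rewrite inE.
have [f [[finj find] ginj]] := forc c cpr.
pose W := cliques_vertex s y.
pose g := fun w : W => c (f w).
pose m := fun j : 'I_s => \max_(w : W | tag w == j) g w.
pose w0 := fun j : 'I_s => Tagged (fun i => 'I_(y i)) (Ordinal (ypos j)).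
pose a := fun j : 'I_s => [arg max_(w > w0 j | tag w == j) g w].
have Ha : forall j, tag (a j) = j /\ m j = g (a j).
  move=> j; split; last by apply: bigmax_eq_arg; rewrite /= eqxx.
  rewrite /a; case: arg_maxnP => [|w /eqP //]; by rewrite /= eqxx.
have claim1 : forall w : W, #|[set j : 'I_s | g w <= m j]| <= #|[set v | c v == g w]|.
  move=> w; pose J := [set j : 'I_s | g w <= m j].
  have -> : #|J| = #|[set f (a j) | j in J]|.
    rewrite card_in_imset // => j1 j2 _ _ /finj h.
    by rewrite -(proj1 (Ha j1)) -(proj1 (Ha j2)) h.
  apply: leq_trans (cm (g w) _ (subsetT _) _ _) _.
  - apply/forallP => x; apply/implyP => /imsetP[j1 _ ->].
    apply/forallP => z; apply/implyP => /imsetP[j2 _ ->].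
    rewrite find /cliques_rel (proj1 (Ha j1)) (proj1 (Ha j2)).
    by case: (eqVneq j1 j2) => [->|//]; rewrite eqxx.
  - move=> v /imsetP[j jJ ->]; rewrite inE in jJ.
    by rewrite -/(g (a j)) -(proj2 (Ha j)).
  - apply: subset_leq_card; apply/subsetP => v; rewrite !inE //.
have claim2 : \sum_(w : W) #|[set v | c v == g w]| <= #|V|.
  rewrite (eq_bigr (fun w => \sum_v (c v == g w))); last by move=> w _; rewrite my_card_sum.
  rewrite exchange_big /= -sum1_card; apply: leq_sum => v _.
  case: (pickP (fun w => c v == g w)) => [w0' /eqP hw0|none].
    rewrite (bigD1 w0') //=.
    rewrite hw0 eqxx big1 // => w hw.
    apply/eqP; rewrite eqb0; apply/eqP => h.
    by move: hw; rewrite (ginj _ _ h) eqxx.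
  by rewrite big1 // => w _; rewrite none.
apply: leq_trans claim2.
apply: (@leq_trans (\sum_(w : W) #|[set j : 'I_s | g w <= m j]|)); last by apply: leq_sum => w _; exact: claim1.
rewrite (eq_bigr (fun w => \sum_j (g w <= m j))); last by move=> w _; rewrite my_card_sum.
apply: leq_trans (pair_ineq m ydec) _.
apply: (@leq_trans (\sum_(w : W) \sum_(j < s) (m (tag w) <= m j))).
  rewrite [X in _ <= X]exchange_big /=; apply: leq_sum => j _.
  by rewrite (sum_tag y (fun i => (m i <= m j : nat))).
apply: leq_sum => w _; apply: leq_sum => j _.
case h: (m (tag w) <= m j) => //=.
by rewrite (leq_trans (@leq_bigmax_cond _ (fun w' => tag w' == tag w) g w (eqxx _)) h).
Qed.

Definition sufs (s : nat) (y : 'I_s -> nat) : 'I_s -> nat :=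
  fun j => \sum_(i < s | j <= i) y i.

Lemma card_sufs (s : nat) (y : 'I_s -> nat) :
  #|cliques_vertex s (sufs y)| = \sum_(i < s) i.+1 * y i.
Proof.
rewrite card_cv /sufs.
rewrite (eq_bigr (fun j : 'I_s => \sum_(i < s) (j <= i) * y i)); last first.
  by move=> j _; rewrite big_mkcond /=; apply: eq_bigr => i _; case: (j <= i); rewrite ?mul1n.
rewrite exchange_big /=; apply: eq_bigr => i _.
by rewrite -big_distrl /= count_le.
Qed.

Lemma simple_cliques (s : nat) (y : 'I_s -> nat) : simple_graph (cliques_rel s y).
Proof.
split; first by move=> u v; rewrite /cliques_rel eq_sym [v == u]eq_sym.
by move=> u; rewrite /cliques_rel !eqxx.
Qed.

Lemma transfer (W V : finType) (eH : rel W) (eG : rel V) :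
  simple_graph eG -> rainbow_forcing eH eG -> rho_admissible eH #|V|.
Proof.
move=> [esym irr] forc.
exists (fun a b : 'I_#|V| => eG (enum_val a) (enum_val b)); split.
  by split; [move=> a b; apply: esym | move=> a; apply: irr].
move=> c' cp.
have [|f [[finj find] ginj]] := forc (fun v => c' (enum_rank v)).
  by move=> x z exz; apply: cp; rewrite !enum_rankK.
exists (fun w => enum_rank (f w)); split; last by [].
split; first by move=> u v /enum_rank_inj /finj.
by move=> u v; rewrite !enum_rankK.
Qed.

Lemma inj_into (T : finType) (S : {set T}) n :
  n <= #|S| -> {h : 'I_n -> T | injective h & forall i, h i \in S}.
Proof.
case: (pickP (mem S)) => [x0 Sx0 | S0] hn.
  exists (fun i => nth x0 (enum S) i).
    move=> i j /eqP; rewrite nth_uniq ?enum_uniq -?cardE ?(leq_trans (ltn_ord _) hn) //.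
    by move=> /eqP; apply: val_inj.
  by move=> i; rewrite -mem_enum mem_nth // -cardE (leq_trans (ltn_ord i) hn).
have n0 : n = 0 by move: hn; rewrite (eq_card0 S0); lia.
subst n.
have h : 'I_0 -> T by case=> i; rewrite ltn0.
by exists h; case.
Qed.

Lemma UB (s : nat) (y : 'I_s -> nat) :
  rainbow_forcing (cliques_rel s y) (cliques_rel s (sufs y)).
Proof.
move=> c cp.
pose V' := cliques_vertex s (sufs y).
pose comp := fun j : 'I_s => [set v : V' | tag v == j].
have ccomp : forall j, #|comp j| = sufs y j.
  move=> j; rewrite /comp (my_card_sum (fun v : V' => tag v == j)).
  rewrite (sum_tag (sufs y) (fun i => (i == j : nat))).
  rewrite (bigD1 j) //= eqxx muln1 big1 ?addn0 // => i /negbTE ->.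
  by rewrite muln0.
have key : forall k, k <= s -> exists S : 'I_s -> {set V'},
  (forall j : 'I_s, s - k <= j -> S j \subset comp j /\ #|S j| = y j) /\
  (forall i j : 'I_s, s - k <= i -> i < j -> forall u v, u \in S i -> v \in S j -> c u != c v).
  elim=> [_|k IH ks].
    exists (fun _ => set0); split.
      by move=> j; rewrite subn0 => h; have := ltn_ord j; lia.
    by move=> i j; rewrite subn0 => h; have := ltn_ord i; lia.
  have [S [S1 S2]] := IH (ltnW ks).
  have j0lt : s - k.+1 < s by lia.
  pose j0 := Ordinal j0lt.
  pose U := \bigcup_(j : 'I_s | j0 < j) S j.
  pose D := [set v in comp j0 | [exists u in U, c u == c v]].
  have cinj : {in comp j0 &, injective c}.
    move=> u v; rewrite !inE => /eqP hu /eqP hv cuv; apply/eqP; apply: contraT => neq.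
    by have := cp u v; rewrite /cliques_rel hu hv eqxx neq => /(_ isT); rewrite cuv.
  have hD : #|D| <= #|U|.
    pose phi := fun v => odflt v [pick u in U | c u == c v].
    have phiP : forall v, v \in D -> phi v \in U /\ c (phi v) = c v.
      move=> v; rewrite inE => /andP[_ /existsP[u0 /andP[u0U /eqP e0]]].
      rewrite /phi; case: pickP => [u /andP[uU /eqP eu]|none] //=.
      by move: (none u0); rewrite u0U e0 eqxx.
    rewrite -(card_in_imset (f:=phi) (D:=D)); last first.
      move=> u v uD vD e; apply: cinj.
      - by move: uD; rewrite inE => /andP[].
      - by move: vD; rewrite inE => /andP[].
      by rewrite -(proj2 (phiP u uD)) -(proj2 (phiP v vD)) e.
    apply: subset_leq_card; apply/subsetP => _ /imsetP[v vD ->].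
    exact: (proj1 (phiP v vD)).
  have hU : #|U| <= \sum_(j < s | j0 < j) y j.
    rewrite /U; elim/big_rec2: _ => [|j n X hj hX]; first by rewrite cards0.
    have hsj : s - k <= j by move: hj => /=; lia.
    rewrite (leq_trans (leq_card_setU _ _).1) // (proj2 (S1 j hsj)) leq_add2l //.
  have hY : sufs y j0 = y j0 + \sum_(j < s | j0 < j) y j.
    rewrite /sufs (bigD1 j0) //=; congr (_ + _); apply: eq_bigl => i.
    by rewrite -val_eqE ltn_neqAle andbC eq_sym.
  pose cand := comp j0 :\: D.
  have hc : y j0 <= #|cand|.
    rewrite cardsD ccomp hY.
    have : #|comp j0 :&: D| <= #|D| by apply: subset_leq_card; apply: subsetIr.
    lia.
  have [T [Tc Tcard]] : exists T : {set V'}, T \subset cand /\ #|T| = y j0.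
    move/card_geqP: hc => [l [ul sl subl]]; exists [set x in l]; split.
      by apply/subsetP => x; rewrite inE; exact: subl.
    by rewrite cardsE (card_uniqP ul).
  exists (fun j => if j == j0 then T else S j); split.
    move=> j hj; case: eqP => [->|/eqP ne].
      by split => //; apply: subset_trans Tc _; exact: subsetDl.
    apply: S1; move: ne hj; rewrite -val_eqE /=; lia.
  move=> i j hi hij u v; case: (eqVneq i j0) => [ei|nei]; case: (eqVneq j j0) => [ej|nej].
  - by move: hij; rewrite ei ej ltnn.
  - move=> uT vS; have vU : v \in U.
      apply: (subsetP (bigcup_sup j _)) vS; by rewrite -ei.
    move: (subsetP Tc u uT); rewrite inE => /andP[uD uc].
    apply/negP => /eqP cuv; move: uD; rewrite inE uc /=.
    by move/negP; apply; apply/existsP; exists v; rewrite vU cuv eqxx.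
  - by move: nei hij hi; rewrite ej -val_eqE /=; lia.
  - apply: S2 => //; move: nei hi; rewrite -val_eqE /=; lia.
have [S [S1 S2]] := key s (leqnn s).
have hfam : forall j, {h : 'I_(y j) -> V' | injective h & forall t, h t \in S j}.
  by move=> j; apply: inj_into; rewrite (proj2 (S1 j _)) // subnn.
pose f := fun w : cliques_vertex s y => s2val (hfam (tag w)) (tagged w).
have fS : forall w, f w \in S (tag w) by move=> w; exact: (s2valP' (hfam (tag w))).
have ftag : forall w, tag (f w) = tag w.
  move=> w; have := fS w; move/(subsetP (proj1 (S1 (tag w) _))).
  by rewrite subnn inE => /(_ isT) /eqP.
have finj : injective f.
  move=> u v e; have et : tag u = tag v by rewrite -ftag e ftag.
  case: u e et => i a; case: v => j b /= e et; subst j.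
  by move: e => /(s2valP (hfam i)) /= ->.
exists f; split; first split.
- exact: finj.
- by move=> u v; rewrite /cliques_rel !ftag (inj_eq finj).
move=> u v /= cuv; case: (ltngtP (tag u) (tag v)) => h.
- have := S2 (tag u) (tag v) _ h (f u) (f v) (fS u) (fS v).
  by rewrite subnn cuv eqxx => /(_ isT).
- have := S2 (tag v) (tag u) _ h (f v) (f u) (fS v) (fS u).
  by rewrite subnn cuv eqxx => /(_ isT).
- have et : tag u = tag v by apply: val_inj.
  apply: finj; apply/eqP; apply: contraT => ne.
  have := cp (f u) (f v); rewrite /cliques_rel !ftag et eqxx ne => /(_ isT).
  by rewrite cuv.
Qed.

Theorem corollary3p2 (s : nat) (y : 'I_s -> nat) :
  (forall i j : 'I_s, i <= j -> y j <= y i) ->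
  (forall i : 'I_s, 0 < y i) ->
  is_rho (cliques_rel s y) (\sum_(i < s) i.+1 * y i).
Proof.
move=> ydec ypos; split.
  rewrite -card_sufs; apply: transfer; [exact: simple_cliques | exact: UB].
move=> k [eG [sg forc]].
by have := LB sg ydec ypos forc; rewrite card_ord.
Qed.
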